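(* Let $\tau_1(x)=\frac{x+1}{x+3}$ and $\tau_2(x)=\frac{2}{4-x}$ on $[0,1]$ (so $\tau_1([0,1])=[1/3,1/2]$, $\tau_2([0,1])=[1/2,2/3]$), and let $A_1(y)=\frac12\left(\log\frac{2}{(y-1)^2}+\log 2\right)$ (used on $\tau_1([0,1])$) and $A_2(y)=\frac12\left(\log\frac{2}{y^2}+\log 2\right)$ (used on $\tau_2([0,1])$). Let $b=\frac{3+\sqrt{17}}{2}$ and $V(x)=\max\{\log(x+b),\log(1-x+b)\}$. Then for every $x\in[0,1]$, $$V(x)+\log b=\max\{A_1(\tau_1(x))+V(\tau_1(x)),\,A_2(\tau_2(x))+V(\tau_2(x))\},$$ i.e. $V$ is a subaction for this potential with maximal value $m(A)=\log\left(\frac{3+\sqrt{17}}{2}\right)$.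
   Context: This is the potential associated (in the ergodic-optimization approach to the joint spectral radius) with the pair of matrices $A_1=\begin{pmatrix}2&1\\2&2\end{pmatrix}$, $A_2=\begin{pmatrix}2&2\\1&2\end{pmatrix}$, whose projective actions on $[0,1]$ are $\tau_1,\tau_2$. Here ''subaction with constant $c$'' means a continuous $V$ satisfying $V(x)+c=\max_{i}[A_i(\tau_i(x))+V(\tau_i(x))]$ for all $x$. *)

(* Defs.v *)
From Stdlib Require Import Reals.
Open Scope R_scope.

Definition tau1 (x : R) : R := (x + 1) / (x + 3).
Definition tau2 (x : R) : R := 2 / (4 - x).

Definition potA1 (y : R) : R := / 2 * (ln (2 / (y - 1) ^ 2) + ln 2).
Definition potA2 (y : R) : R := / 2 * (ln (2 / y ^ 2) + ln 2).

Definition bconst : R := (3 + sqrt 17) / 2.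

Definition subV (x : R) : R := Rmax (ln (x + bconst)) (ln (1 - x + bconst)).

(* Main.v *)
Require Import Defs.
From Stdlib Require Import Reals Lra.
Open Scope R_scope.

Lemma ln_mono a c : 0 < a -> a <= c -> ln a <= ln c.
Proof. intros Ha Hac. destruct (Rle_lt_or_eq_dec _ _ Hac) as [H|H].
  - left; apply ln_increasing; auto.
  - rewrite H; right; reflexivity. Qed.

Lemma b_pos : 3 < bconst.
Proof. unfold bconst. assert (0 < sqrt 17) by (apply sqrt_lt_R0; lra).
  assert (H0 := sqrt_sqrt 17 ltac:(lra)). assert (3 < sqrt 17) by nra. lra. Qed.

Lemma b_sq : bconst * bconst = 3 * bconst + 2.
Proof. unfold bconst. assert (H := sqrt_sqrt 17 ltac:(lra)). set (s := sqrt 17) in *.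
  assert (E: (3+s)/2*((3+s)/2) - (3*((3+s)/2)+2) = (s*s - 17)/4) by field. rewrite H in E. lra. Qed.

Lemma rmax_l a c : c <= a -> Rmax a c = a.
Proof. intros; unfold Rmax; destruct Rle_dec; lra. Qed.
Lemma rmax_r a c : a <= c -> Rmax a c = c.
Proof. intros; unfold Rmax; destruct Rle_dec; lra. Qed.

Lemma half_ln z : 0 < z -> / 2 * ln (z ^ 2) = ln z.
Proof. intros; rewrite ln_pow by lra; simpl; field. Qed.

Lemma part1 x : 0 <= x <= 1 ->
  potA1 (tau1 x) + subV (tau1 x) = ln bconst + ln (x + bconst).
Proof.
  intros Hx. pose proof b_pos. pose proof b_sq.
  unfold potA1, subV, tau1.
  assert (Y1: 1 - (x + 1) / (x + 3) = 2 / (x+3)) by (field; lra).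
  assert (Y0: 0 < 2 / (x+3)) by (apply Rdiv_lt_0_compat; lra).
  assert (Y2: 2 / (x+3) >= 1/2).
  { apply Rle_ge. apply Rmult_le_reg_r with (x+3); [lra|].
    field_simplify; lra. }
  assert (Y3: 2 / (x+3) <= 1).
  { apply Rmult_le_reg_r with (x+3); [lra|]. field_simplify; lra. }
  assert (E1: 2 / ((x + 1) / (x + 3) - 1) ^ 2 * 2 = (x+3)^2) by (field; lra).
  assert (P1: 0 < 2 / ((x + 1) / (x + 3) - 1) ^ 2).
  { apply Rdiv_lt_0_compat; [lra|]. replace ((x + 1) / (x + 3) - 1) with (- (2/(x+3))) by lra. simpl; nra. }
  rewrite <- ln_mult, E1, half_ln by lra.
  rewrite rmax_r by (apply ln_mono; lra).
  rewrite Y1, <- !ln_mult by nra.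
  f_equal. apply Rmult_eq_reg_r with (x+3); [|lra].
  field_simplify; nra.
Qed.

Lemma part2 x : 0 <= x <= 1 ->
  potA2 (tau2 x) + subV (tau2 x) = ln bconst + ln (1 - x + bconst).
Proof.
  intros Hx. pose proof b_pos. pose proof b_sq.
  unfold potA2, subV, tau2.
  assert (Y0: 0 < 2 / (4 - x)) by (apply Rdiv_lt_0_compat; lra).
  assert (Y2: 2 / (4 - x) >= 1/2).
  { apply Rle_ge. apply Rmult_le_reg_r with (4 - x); [lra|].
    field_simplify; lra. }
  assert (Y3: 2 / (4 - x) <= 1).
  { apply Rmult_le_reg_r with (4 - x); [lra|].
    field_simplify; lra. }
  assert (E1: 2 / (2 / (4 - x)) ^ 2 * 2 = (4 - x)^2) by (field; lra).
  assert (P1: 0 < 2 / (2 / (4 - x)) ^ 2).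
  { apply Rdiv_lt_0_compat; simpl; nra. }
  rewrite <- ln_mult, E1, half_ln by lra.
  rewrite rmax_l by (apply ln_mono; lra).
  rewrite <- !ln_mult by nra.
  f_equal. apply Rmult_eq_reg_r with (4 - x); [|lra].
  field_simplify; nra.
Qed.

Theorem mainTheorem3 :
  forall x : R, 0 <= x <= 1 ->
    subV x + ln bconst = Rmax (potA1 (tau1 x) + subV (tau1 x)) (potA2 (tau2 x) + subV (tau2 x)).
Proof.
  intros x Hx. rewrite part1, part2 by exact Hx. unfold subV, Rmax.
  destruct Rle_dec; destruct Rle_dec; lra.
Qed.
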